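(* Let $W_2\in\{M_2,S_2\}$, where $M_2$ is the space of $2\times 2$ real matrices and $S_2$ is the subspace of real symmetric $2\times2$ matrices, and let $\phi:W_2\to W_2$ be a linear map. Then $\phi$ preserves the Lorentz spectrum (i.e. $\sigma_{\mathcal{K}}(\phi(A))=\sigma_{\mathcal{K}}(A)$ for all $A\in W_2$) if and only if either $\phi(A)=PAP^{-1}$ for all $A\in W_2$, or $\phi(A)=QAQ^{-1}$ for all $A\in W_2$, where $$P=\begin{bmatrix}\alpha&\beta\\ \beta&\alpha\end{bmatrix},\qquad Q=\begin{bmatrix}-\alpha&-\beta\\ \beta&\alpha\end{bmatrix}$$ for some $\alpha,\beta\in\mathbb{R}$ with $\alpha^2-\beta^2=1$, and with $\beta=0$ if $W_2=S_2$.
   Context: The Lorentz cone in $\mathbb{R}^2$ is $\mathcal{K}=\{(x_1,x_2)^T\in\mathbb{R}^2:\ |x_1|\le x_2\}$. For $A\in M_2$, a real number $\lambda$ is a Lorentz eigenvalue (L-eigenvalue) of $A$ if there is a nonzero $x\in\mathbb{R}^2$ with $x\in\mathcal{K}$, $(A-\lambda I)x\in\mathcal{K}$ and $x^T(A-\lambda I)x=0$; such $x$ is an L-eigenvector. The Lorentz spectrum $\sigma_{\mathcal{K}}(A)$ is the set of all L-eigenvalues of $A$. *)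

(* Defs.v *)
From mathcomp Require Import all_boot all_order all_algebra.
From mathcomp Require Import reals.
Set Implicit Arguments. Unset Strict Implicit. Unset Printing Implicit Defensive.
Import Order.TTheory GRing.Theory Num.Theory.
Local Open Scope ring_scope.

Section Lorentz.
Variable R : realType.

(* Lorentz cone in R^2: (x1,x2)^T with |x1| <= x2; indices 0,1 stand for 1,2. *)
Definition lorentz_cone (x : 'cV[R]_2) : Prop := `|x 0 0| <= x 1 0.

Definition L_eigenvalue (A : 'M[R]_2) (l : R) : Prop :=
  exists x : 'cV[R]_2, [/\ x != 0, lorentz_cone x,
    lorentz_cone ((A - l%:M) *m x) & (x^T *m (A - l%:M) *m x) 0 0 = 0].

Definition L_spectrum (A : 'M[R]_2) : R -> Prop := fun l => L_eigenvalue A l.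

Definition same_L_spectrum (A B : 'M[R]_2) : Prop :=
  forall l, L_spectrum A l <-> L_spectrum B l.

Definition Pmx (a b : R) : 'M[R]_2 :=
  \matrix_(i < 2, j < 2) if i == j then a else b.

Definition Qmx (a b : R) : 'M[R]_2 :=
  \matrix_(i < 2, j < 2)
    if (i == 0 :> nat) then (if (j == 0 :> nat) then - a else - b)
    else (if (j == 0 :> nat) then b else a).

Definition sym2 (A : 'M[R]_2) : Prop := A^T = A.

End Lorentz.

(* Main.v *)
Require Import Defs.
From mathcomp Require Import all_boot all_order all_algebra.
From mathcomp Require Import reals.
From mathcomp Require Import ring lra.
Import Order.TTheory GRing.Theory Num.Theory.
Local Open Scope ring_scope.

Section Proof.
Variable R : realType.

Record pm := PM { p11 : R; p12 : R; p21 : R; p22 : R }.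
Definition Pi (m : pm) (l : R) : Prop :=
  (0 <= p21 m /\ l = p11 m) \/ (0 <= p12 m /\ l = p22 m) \/
  (exists w, 0 < w /\ p11 m + p12 m * w = l /\ p21 m + p22 m * w = l * w).

Lemma ex_sqrt (a : R) : 0 <= a -> exists s, 0 <= s /\ s * s = a.
Proof. move=> ha; exists (Num.sqrt a); split; first exact: sqrtr_ge0.
by rewrite -expr2 sqr_sqrtr. Qed.

Lemma Lxsx (m : pm) l : p22 m = p11 m ->
  Pi m l <-> ((0 <= p12 m \/ 0 <= p21 m) /\ l = p11 m) \/
     (l <> p11 m /\ (l - p11 m) * (l - p11 m) = p12 m * p21 m /\ 0 < (l - p11 m) * p12 m).
Proof.
case: m => x s t x' /= ->; rewrite /Pi /=; split.
- case=> [[h ->]|[[h ->]|[w [hw [e1 e2]]]]].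
  + by left; split; [right|].
  + by left; split; [left|].
  have hl : l - x = s * w by rewrite -e1; ring.
  have ht : t = s * w * w.
  by rewrite -hl mulrBl -e2; ring.
  have [s0|s0|s0] := ltgtP s 0.
  + have h1 : 0 < (- s) * w by apply: mulr_gt0; lra.
    right; split; [move=> E; nra|split; nra].
  + have h1 : 0 < s * w by apply: mulr_gt0; lra.
    right; split; [move=> E; nra|split; nra].
  + left; split; [left; lra|]. nra.
- case=> [[[h|h] ->]|[hne [hsq hpos]]].
  + by right; left.
  + by left.
  have hs : s != 0 by apply/eqP => s0; move: hpos; rewrite s0 mulr0 ltxx.
  right; right; exists ((l - x) / s); split.
  + have -> : (l - x) / s = ((l - x) * s) / (s * s) by field.
    apply: divr_gt0 => //. nra.
  split; first by field.
  apply: (mulfI hs). rewrite mulrDr. 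
  have -> : s * t = (l - x) * (l - x) by rewrite hsq.
  field.
  exact: hs.
Qed.

Definition lin (X1 X2 X3 X4 m : pm) : pm :=
  PM (p11 m * p11 X1 + p12 m * p11 X2 + p21 m * p11 X3 + p22 m * p11 X4)
     (p11 m * p12 X1 + p12 m * p12 X2 + p21 m * p12 X3 + p22 m * p12 X4)
     (p11 m * p21 X1 + p12 m * p21 X2 + p21 m * p21 X3 + p22 m * p21 X4)
     (p11 m * p22 X1 + p12 m * p22 X2 + p21 m * p22 X3 + p22 m * p22 X4).

Lemma pm_eq (m : pm) a b c d : p11 m = a -> p12 m = b -> p21 m = c -> p22 m = d ->
  m = PM a b c d.
Proof. by case: m => ???? /= -> -> -> ->. Qed.

Lemma diag_fix (G G' : pm) x :
  (forall l, Pi G l -> l = x) -> (forall l, Pi G' l -> l = - x) ->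
  p11 G' = - p11 G -> p12 G' = - p12 G -> p21 G' = - p21 G -> p22 G' = - p22 G ->
  p11 G = x /\ p22 G = x.
Proof.
move=> h h' e1 e2 e3 e4; split.
- have [c0|c0] := leP 0 (p21 G).
  + by apply: h; left.
  + have : - p11 G = - x by rewrite -e1; apply: h'; left; split => //; rewrite e3; lra.
    lra.
- have [c0|c0] := leP 0 (p12 G).
  + by apply: h; right; left.
  + have : - p22 G = - x by rewrite -e4; apply: h'; right; left; split => //; rewrite e2; lra.
    lra.
Qed.

Lemma st0 x s t l : s * t = 0 -> Pi (PM x s t x) l -> l = x.
Proof.
move=> hst /Lxsx => /(_ erefl) [[_ ->]//|/= [hne [hsq _]]].
have /eqP : (l - x) * (l - x) = 0 by rewrite hsq.
by rewrite mulf_eq0 orbb subr_eq0 => /eqP.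
Qed.

Lemma step1 X1 X2 X3 X4 : (forall m l, Pi (lin X1 X2 X3 X4 m) l <-> Pi m l) ->
  [/\ p11 X4 = 1 - p11 X1, p22 X4 = 1 - p22 X1, p12 X4 = - p12 X1, p21 X4 = - p21 X1 &
   exists r, 0 < r /\
    ((X2 = PM 0 r 0 0 /\ X3 = PM 0 0 r^-1 0) \/ (X2 = PM 0 0 r^-1 0 /\ X3 = PM 0 r 0 0))].
Proof.
move=> H.
have Hd : forall x s t, s * t = 0 ->
    p11 (lin X1 X2 X3 X4 (PM x s t x)) = x /\ p22 (lin X1 X2 X3 X4 (PM x s t x)) = x.
  move=> x s t hst.
  apply: (diag_fix _ (lin X1 X2 X3 X4 (PM (-x) (-s) (-t) (-x)))).  
  - by move=> l /H; apply: st0 hst.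
  - by move=> l /H; apply: st0; rewrite mulrNN.
  1-4: by rewrite /lin /=; ring.
have [d1 d2] := Hd 1 0 0 (mulr0 _).
have [d3 d4] := Hd 0 1 0 (mulr0 _).
have [d5 d6] := Hd 0 0 1 (mul0r _).
rewrite /lin /= in d1 d2 d3 d4 d5 d6.
have e11 : p11 X4 = 1 - p11 X1 by lra.
have e22 : p22 X4 = 1 - p22 X1 by lra.
have e2a : p11 X2 = 0 by lra.
have e2b : p22 X2 = 0 by lra.
have e3a : p11 X3 = 0 by lra.
have e3b : p22 X3 = 0 by lra.
set c2 := p12 X1 + p12 X4.
set c3 := p21 X1 + p21 X4.
set b2 := p12 X2. set e2 := p12 X3. set b3 := p21 X2. set e3 := p21 X3.
have Hb : forall x s t, 0 < s -> 0 < t ->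
    (x * c2 + s * b2 + t * e2) * (x * c3 + s * b3 + t * e3) = s * t /\
    0 < x * c2 + s * b2 + t * e2.
  move=> x s t hs ht.
  have [q [q0 qq]] := ex_sqrt (s * t) (ltW (mulr_gt0 hs ht)).
  have hq : 0 < q by nra.
  have hP : Pi (PM x s t x) (x + q).
    apply/Lxsx => //=; right; split; first by move=> E; lra.
    split; first by rewrite -qq; ring.
    have -> : (x + q - x) * s = q * s by ring.
    exact: mulr_gt0.
  move/H: hP => /Lxsx.
  have hd1 : p11 (lin X1 X2 X3 X4 (PM x s t x)) = x.
    by rewrite /lin /= e11 e2a e3a; ring.
  have hd2 : p22 (lin X1 X2 X3 X4 (PM x s t x)) = p11 (lin X1 X2 X3 X4 (PM x s t x)).
    by rewrite hd1 /lin /= e22 e2b e3b; ring.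
  move/(_ hd2); rewrite hd1.
  have E1 : p12 (lin X1 X2 X3 X4 (PM x s t x)) = x * c2 + s * b2 + t * e2
    by rewrite /lin /c2 /b2 /e2 /=; ring.
  have E2 : p21 (lin X1 X2 X3 X4 (PM x s t x)) = x * c3 + s * b3 + t * e3
    by rewrite /lin /c3 /b3 /e3 /=; ring.
  rewrite E1 E2; case=> [[_ E]|[_ [hsq hpos]]]; first by lra.
  have eqq : x + q - x = q by ring.
  rewrite eqq in hsq hpos.
  split; first by rewrite -hsq qq.
  by rewrite pmulr_rgt0 in hpos.
have two : (0:R) < 2 by lra.
have [h1 h1p] := Hb 0 1 1 ltr01 ltr01.
have [h2 _] := Hb 0 2 1 two ltr01.
have [h3 _] := Hb 0 1 2 ltr01 two.
have [h4 _] := Hb 1 1 1 ltr01 ltr01.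
have [h5 _] := Hb (-1) 1 1 ltr01 ltr01.
have A0 : b2 * b3 = 0 by nra.
have B1 : b2 * e3 + e2 * b3 = 1 by nra.
have C0 : e2 * e3 = 0 by nra.
have CC : c2 * c3 = 0 by nra.
have CD : c2 * (b3 + e3) + c3 * (b2 + e2) = 0 by nra.
have PQ : (b2 + e2) * (b3 + e3) = 1 by nra.
have [c20 c30] : c2 = 0 /\ c3 = 0.
  move/eqP: CC; rewrite mulf_eq0 => /orP [/eqP c0|/eqP c0]; rewrite c0 in CD *.
  - split => //; apply/eqP; apply: contraT => hc.
    have : c3 * (b2 + e2) != 0 by rewrite mulf_neq0 //; apply/eqP => E; rewrite E mul0r in PQ; lra.
    by rewrite mul0r add0r in CD; rewrite CD eqxx.
  - split => //; apply/eqP; apply: contraT => hc.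
    have : c2 * (b3 + e3) != 0 by rewrite mulf_neq0 //; apply/eqP => E; rewrite E mulr0 in PQ; lra.
    by rewrite mul0r addr0 in CD; rewrite CD eqxx.
split.
- exact: e11.
- exact: e22.
- rewrite /c2 in c20; lra.
- rewrite /c3 in c30; lra.
have [b20|b2n0] := eqVneq b2 0.
- rewrite b20 mul0r add0r in B1.
  have e2n : e2 != 0 by apply/eqP => E; rewrite E mul0r in B1; lra.
  have e30 : e3 = 0 by move/eqP: C0; rewrite mulf_eq0 (negbTE e2n) /= => /eqP.
  have e2p : 0 < e2 by rewrite b20 in h1p; lra.
  exists e2; split => //; right; split.
  + apply: pm_eq => //. rewrite -/b3; apply: (mulfI e2n); rewrite B1 mulfV //.
  + by apply: pm_eq.
- have b30 : b3 = 0 by move/eqP: A0; rewrite mulf_eq0 (negbTE b2n0) /= => /eqP.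
  rewrite b30 mulr0 addr0 in B1.
  have e3n : e3 != 0 by apply/eqP => E; rewrite E mulr0 in B1; lra.
  have e20 : e2 = 0 by move/eqP: C0; rewrite mulf_eq0 (negbTE e3n) orbF => /eqP.
  have b2p : 0 < b2 by rewrite e20 in h1p; lra.
  exists b2; split => //; left; split.
  + by apply: pm_eq.
  + apply: pm_eq => //. rewrite -/e3; apply: (mulfI b2n0); rewrite B1 mulfV //.
Qed.

Lemma Pi_eq (a b c d a' b' c' d' l : R) : a = a' -> b = b' -> c = c' -> d = d' ->
  Pi (PM a b c d) l -> Pi (PM a' b' c' d') l.
Proof. by move=> -> -> -> ->. Qed.

Lemma PiA (s t : R) : Pi (PM 1 s t 0) 1 <-> 0 <= t.
Proof.
rewrite /Pi /=; split.
- case=> [[h _]//|[[_ h]|[w [hw [f1 f2]]]]]; first by lra.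
  have -> : t = w by rewrite mul0r addr0 mul1r in f2.
  exact: ltW.
- by move=> h; left.
Qed.

Lemma PiB (S : R) : Pi (PM 0 S 0 1) 1 <-> 0 <= S.
Proof.
rewrite /Pi /=; split.
- case=> [[_ h]|[[h _]//|[w [hw [f1 f2]]]]]; first by lra.
  rewrite add0r in f1.
  have : 0 < S * w by rewrite f1.
  by rewrite pmulr_lgt0 // => /ltW.
- by move=> h; right; left.
Qed.

Lemma step2 (X1 X2 X3 X4 : pm) (r : R) : 0 < r -> (forall m l, Pi (lin X1 X2 X3 X4 m) l <-> Pi m l) ->
  X2 = PM 0 r 0 0 -> X3 = PM 0 0 r^-1 0 ->
  p11 X4 = 1 - p11 X1 -> p22 X4 = 1 - p22 X1 -> p12 X4 = - p12 X1 -> p21 X4 = - p21 X1 ->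
  forall m, lin X1 X2 X3 X4 m = PM (p11 m) (r * p12 m) (p21 m / r) (p22 m).
Proof.
move=> hr H h2 h3 e1 e2 e3 e4.
have rn : r != 0 by rewrite gt_eqF.
have ri : 0 < r^-1 by rewrite invr_gt0.
case: X1 H e1 e2 e3 e4 => p q u v H /= e1 e2 e3 e4.
have h4 : X4 = PM (1 - p) (- q) (- u) (1 - v) by apply: pm_eq.
subst X2 X3 X4.
have Lf : forall a b c d, lin (PM p q u v) (PM 0 r 0 0) (PM 0 0 r^-1 0)
    (PM (1 - p) (- q) (- u) (1 - v)) (PM a b c d) =
    PM (a * p + d * (1 - p)) (a * q + b * r - d * q) (a * u + c / r - d * u) (a * v + d * (1 - v)).
  by move=> a b c d; rewrite /lin /=; congr PM; ring.
have p1 : p = 1.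
  set t := r * (u * u + 1) + 1.
  have ht : 1 <= t.
    have : 0 <= r * (u * u + 1) by apply: mulr_ge0; [exact: ltW| have := sqr_ge0 u; rewrite expr2; lra].
    rewrite /t; lra.
  have : Pi (PM 1 (-1) t 0) p.
    apply/H; rewrite Lf; left => /=; split; last by ring.
    have -> : 1 * u + t / r - 0 * u = (u + 1/2) * (u + 1/2) + 3/4 + r^-1 by rewrite /t; field.
    have := sqr_ge0 (u + 1/2); rewrite expr2; lra.
  rewrite /Pi /=; case=> [[_ ->]//|[[h _]|[w [hw [f1 f2]]]]]; first by lra.
  exfalso; rewrite mul0r addr0 -f1 in f2.
  have := sqr_ge0 (w - 1/2); rewrite expr2.
  have -> : (w - 1/2) * (w - 1/2) = 1/4 - (1 + -1 * w) * w by field.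
  lra.
have v0 : v = 0.
  set s := (q * q + 1) / r.
  have hs : 0 < s by rewrite /s divr_gt0 //; have := sqr_ge0 q; rewrite expr2; lra.
  have : Pi (PM 1 s (-1) 0) v.
    apply/H; rewrite Lf; right; left => /=; split; last by ring.
    have -> : 1 * q + s * r - 0 * q = (q + 1/2) * (q + 1/2) + 3/4 by rewrite /s; field.
    have := sqr_ge0 (q + 1/2); rewrite expr2; lra.
  rewrite /Pi /=; case=> [[h _]|[[_ ->]//|[w [hw [f1 f2]]]]]; first by lra.
  exfalso; rewrite mul0r addr0 -f1 in f2.
  have : 0 < (1 + s * w) * w by apply: mulr_gt0 => //; have := mulr_gt0 hs hw; lra.
  lra.
subst p v.
have u0 : u = 0.
  have HH : forall t, (0 <= t <-> 0 <= u + t / r).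
    move=> t; split => h.
    - have h1 : Pi (PM 1 (- q / r) t 0) 1 by apply/PiA.
      have := (H _ _).2 h1; rewrite Lf => h2.
      apply/(PiA 0); move: h2; apply: Pi_eq; by field.
    - apply: (PiA (- q / r) t).1; apply/H; rewrite Lf.
      have h1 : Pi (PM 1 0 (u + t / r) 0) 1 by apply/PiA.
      move: h1; apply: Pi_eq; by field.
  have h1 : 0 <= u by have := (HH 0).1 (lexx _); rewrite mul0r addr0.
  have h2 : 0 <= - (r * u) by apply/HH; have -> : u + - (r * u) / r = 0 by field.
  have h3 : 0 <= r * u by apply: mulr_ge0 => //; exact: ltW.
  have h4 : r * u = 0 by lra.
  by move/eqP: h4; rewrite mulf_eq0 (negbTE rn) /= => /eqP.
subst u.
have q0 : q = 0.
  have HH : forall s, (0 <= s <-> 0 <= s * r - q).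
    move=> s; split => h.
    - have h1 : Pi (PM 0 s 0 1) 1 by apply/PiB.
      have := (H _ _).2 h1; rewrite Lf => h2.
      apply/PiB; move: h2; apply: Pi_eq; by field.
    - apply/PiB; apply/H; rewrite Lf.
      have h1 : Pi (PM 0 (s * r - q) 0 1) 1 by apply/PiB.
      move: h1; apply: Pi_eq; by field.
  have h1 : 0 <= - q by have := (HH 0).1 (lexx _); rewrite mul0r add0r.
  have h2 : 0 <= q / r by apply/HH; have -> : q / r * r - q = 0 by field.
  have : 0 <= q / r * r by apply: mulr_ge0 => //; exact: ltW.
  rewrite divfK //; lra.
subst q.
case=> a b c d; rewrite Lf /=; congr PM; ring.
Qed.

Definition swp (m : pm) := PM (p22 m) (p21 m) (p12 m) (p11 m).

Lemma Pi_swap1 (m : pm) (l : R) : Pi (swp m) l -> Pi m l.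
Proof.
case: m => a b c d; rewrite /Pi /=.
case=> [[h ->]|[[h ->]|[w [hw [f1 f2]]]]]; [by right; left|by left|].
right; right; exists w^-1; split; first by rewrite invr_gt0.
have wn : w != 0 by rewrite gt_eqF.
split.
- have -> : b = l * w - a * w by rewrite -f2; ring.
  by field.
- have -> : c = (l - d) / w by rewrite -f1; field.
  by field.
Qed.

Lemma Pi_swap (m : pm) (l : R) : Pi (swp m) l <-> Pi m l.
Proof. split; first exact: Pi_swap1. by case: m => a b c d H; apply: Pi_swap1. Qed.

Lemma swp_lin (X1 X2 X3 X4 m : pm) :
  swp (lin X1 X2 X3 X4 m) = lin (swp X1) (swp X2) (swp X3) (swp X4) m.
Proof. by []. Qed.

Lemma core1 (X1 X2 X3 X4 : pm) : (forall m l, Pi (lin X1 X2 X3 X4 m) l <-> Pi m l) ->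
  exists r, 0 < r /\
   ((forall m, lin X1 X2 X3 X4 m = PM (p11 m) (r * p12 m) (p21 m / r) (p22 m)) \/
    (forall m, lin X1 X2 X3 X4 m = PM (p22 m) (r * p21 m) (p12 m / r) (p11 m))).
Proof.
move=> H.
have [e1 e2 e3 e4 [r [hr [[h2 h3]|[h2 h3]]]]] := step1 _ _ _ _ H.
- by exists r; split => //; left; apply: (step2 _ _ _ _ _ hr H h2 h3 e1 e2 e3 e4).
- exists r; split => //; right => m.
  have H' : forall m l, Pi (lin (swp X1) (swp X2) (swp X3) (swp X4) m) l <-> Pi m l.
    by move=> m' l; rewrite -swp_lin Pi_swap.
  have ri : 0 < r^-1 by rewrite invr_gt0.
  have E : lin (swp X1) (swp X2) (swp X3) (swp X4) m =
      PM (p11 m) (r^-1 * p12 m) (p21 m / r^-1) (p22 m).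
    apply: (step2 _ _ _ _ _ ri H').
    - by rewrite h2.
    - by rewrite h3 /swp /= invrK.
    - exact: e2.
    - exact: e1.
    - exact: e4.
    - exact: e3.
  rewrite -swp_lin in E.
  move: E; case: (lin X1 X2 X3 X4 m) => a b c d /= [-> -> -> ->].
  have rn : r != 0 by rewrite gt_eqF.
  congr PM; by field.
Qed.

Lemma perron (a b d : R) : 0 < b -> exists l, Pi (PM a b b d) l /\ a < l /\ d < l.
Proof.
move=> hb.
have hb2 : 0 < b * b by apply: mulr_gt0.
have hD : 0 <= (a - d) * (a - d) + 4 * (b * b).
  have := sqr_ge0 (a - d); rewrite expr2; lra.
have [s [s0 ss]] := ex_sqrt _ hD.
have h1 : a - d < s by nra.
have h2 : d - a < s by nra.
set l := (a + d + s) / 2.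
have bn : b != 0 by rewrite gt_eqF.
exists l; split; last by split; rewrite /l; lra.
right; right => /=; exists ((l - a) / b); split.
  by apply: divr_gt0 => //; rewrite /l; lra.
split; first by field.
have key : (l - a) * (l - d) = b * b.
  transitivity ((s * s - (a - d) * (a - d)) / 4); first by rewrite /l; field.
  by rewrite ss; field.
apply: (mulfI bn).
have -> : b * (b + d * ((l - a) / b)) = b * b + d * (l - a) by field.
have -> : b * (l * ((l - a) / b)) = l * (l - a) by field.
rewrite -key; ring.
Qed.

Lemma pi_sym_neg (a b d l : R) : b < 0 -> Pi (PM a b b d) l -> l < a /\ l < d.
Proof.
move=> hb; rewrite /Pi /=; case=> [[h _]|[[h _]|[w [hw [f1 f2]]]]]; try lra.
have h1 : b * w < 0 by rewrite pmulr_llt0.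
split; first by lra.
have : (l - d) * w < 0 by rewrite mulrBl -f2; lra.
by rewrite pmulr_llt0 // subr_lt0.
Qed.

Lemma pi_diag (p v l : R) : Pi (PM p 0 0 v) l <-> l = p \/ l = v.
Proof.
rewrite /Pi /=; split.
- case=> [[_ ->]|[[_ ->]|[w [hw [f1 f2]]]]]; [by left|by right|].
  by left; rewrite -f1 mul0r addr0.
- by case=> ->; [left|right; left]; split.
Qed.

Lemma pi_0110 (l : R) : Pi (PM 0 1 1 0) l <-> l = 0 \/ l = 1.
Proof.
rewrite (Lxsx (PM 0 1 1 0) l erefl) /=; split.
- case=> [[_ ->]|[hne [hsq hpos]]]; first by left.
  right; rewrite subr0 mulr1 in hsq hpos; nra.
- case=> ->; first by left; split => //; left; lra.
  right; split; first by lra.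
  split; rewrite subr0 ?mulr1 //; lra.
Qed.

Lemma pi_0mm (l : R) : Pi (PM 0 (-1) (-1) 0) l <-> l = -1.
Proof.
rewrite (Lxsx (PM 0 (-1) (-1) 0) l erefl) /=; split.
- case=> [[[h|h] _]|[hne [hsq hpos]]]; try lra.
  rewrite subr0 in hsq hpos; nra.
- move=> ->; right; split; first by lra.
  split; rewrite subr0; lra.
Qed.

Definition slin (Y1 Y2 Y4 : pm) (a b d : R) :=
  PM (a * p11 Y1 + b * p11 Y2 + d * p11 Y4) (a * p12 Y1 + b * p12 Y2 + d * p12 Y4)
     (a * p21 Y1 + b * p21 Y2 + d * p21 Y4) (a * p22 Y1 + b * p22 Y2 + d * p22 Y4).

Lemma core2 (Y1 Y2 Y4 : pm) : p12 Y1 = p21 Y1 -> p12 Y2 = p21 Y2 -> p12 Y4 = p21 Y4 ->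
  (forall a b d l, Pi (slin Y1 Y2 Y4 a b d) l <-> Pi (PM a b b d) l) ->
  (forall a b d, slin Y1 Y2 Y4 a b d = PM a b b d) \/
  (forall a b d, slin Y1 Y2 Y4 a b d = PM d b b a).
Proof.
case: Y1 => p q q' v; case: Y2 => al be be' de; case: Y4 => x y y' z /= s1 s2 s4 H.
subst q' be' y'.
have HH : forall a b d l A B D, A = a * p + b * al + d * x -> B = a * q + b * be + d * y ->
    D = a * v + b * de + d * z -> (Pi (PM A B B D) l <-> Pi (PM a b b d) l).
  by move=> a b d l A B D -> -> ->; exact: H.
have HC : forall l, Pi (PM (p + x) (q + y) (q + y) (v + z)) l <-> l = 1.
  move=> l; rewrite (HH 1 0 1); try ring.
  by rewrite pi_diag; split; [case|left].
have HC' : forall l, Pi (PM (- (p + x)) (- (q + y)) (- (q + y)) (- (v + z))) l <-> l = -1.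
  move=> l; rewrite (HH (-1) 0 (-1)); try ring.
  by rewrite pi_diag; split; [case|left].
have [cx cz] := diag_fix _ _ 1 (fun l => (HC l).1) (fun l => (HC' l).1) erefl erefl erefl erefl.
rewrite /= in cx cz.
have cy : q + y = 0.
  have [h|h|//] := ltgtP (q + y) 0.
  - have : Pi (PM (- (p + x)) (- (q + y)) (- (q + y)) (- (v + z))) (-1 - (q + y)).
      apply/Lxsx => /=; first by rewrite cx cz.
      right; rewrite cx; split; first by lra.
      split; first by ring.
      have -> : (-1 - (q + y) - - 1) * - (q + y) = (q + y) * (q + y) by ring.
      nra.
    move/HC'; lra.
  - have : Pi (PM (p + x) (q + y) (q + y) (v + z)) (1 + (q + y)).
      apply/Lxsx => /=; first by rewrite cx cz.
      right; rewrite cx; split; first by lra.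
      split; first by ring.
      have -> : (1 + (q + y) - 1) * (q + y) = (q + y) * (q + y) by ring.
      nra.
    move/HC; lra.
have ex : x = 1 - p by lra.
have ey : y = - q by lra.
have ez : z = 1 - v by lra.
subst x y z.
have HB : forall l, Pi (PM al be be de) l <-> l = 0 \/ l = 1.
  by move=> l; rewrite (HH 0 1 0) ?pi_0110 //; ring.
have HB' : forall l, Pi (PM (- al) (- be) (- be) (- de)) l <-> l = -1.
  by move=> l; rewrite (HH 0 (-1) 0) ?pi_0mm //; ring.
have bep : 0 < be.
  case: (lerP be 0) => // hbe; exfalso.
  have a1 : - al = -1 by apply/HB'; left => /=; split => //; lra.
  have d1 : - de = -1 by apply/HB'; right; left => /=; split => //; lra.
  have al1 : al = 1 by lra.
  have de1 : de = 1 by lra.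
  subst al de.
  have : Pi (PM 1 be be 1) 0 by apply/HB; left.
  move/Lxsx => /(_ erefl) /= [[_ h]|[_ [hsq hpos]]]; first by lra.
  have hbn : be < 0 by nra.
  have : Pi (PM 1 be be 1) 1 by apply/HB; right.
  move/Lxsx => /(_ erefl) /= [[[h|h] _]|[hne _]]; lra.
have ha : al = 0 \/ al = 1 by apply/HB; left => /=; split => //; lra.
have hd : de = 0 \/ de = 1 by apply/HB; right; left => /=; split => //; lra.
have [l [hl [hla hld]]] := perron al be de bep.
have hl' := (HB l).1 hl.
have al0 : al = 0 by case: ha; case: hl'; lra.
have de0 : de = 0 by case: hd; case: hl'; lra.
subst al de.
have be1 : be = 1.
  have : Pi (PM 0 be be 0) 1 by apply/HB; right.
  move/Lxsx => /(_ erefl) /= [[_ h]|[_ [hsq hpos]]]; first by lra.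
  rewrite subr0 mul1r in hsq hpos; nra.
subst be.
have H1 : forall l, Pi (PM p 0 0 v) l <-> Pi (PM 1 (- q) (- q) 0) l.
  by move=> l0; rewrite (HH 1 (-q) 0) //; ring.
have H0 : forall l, Pi (PM p q q v) l <-> Pi (PM 1 0 0 0) l.
  by move=> l0; rewrite (HH 1 0 0) //; ring.
have q0 : q = 0.
  have [h|h|//] := ltgtP q 0.
  - have hq : 0 < - q by lra.
    have [r [hr [hr1 hr0]]] := perron 1 (- q) 0 hq.
    have A : r = p \/ r = v by apply/pi_diag/H1.
    have B : 1 = p \/ 1 = v by apply/pi_diag/H1; left => /=; split => //; lra.
    have C : 0 = p \/ 0 = v by apply/pi_diag/H1; right; left => /=; split => //; lra.
    case: A => A; case: B => B; case: C => C; lra.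
  - have A : Pi (PM 1 0 0 0) p by apply/H0; left => /=; split => //; lra.
    have B : Pi (PM 1 (- q) (- q) 0) p by apply/H1; apply/pi_diag; left.
    have hq' : - q < 0 by lra.
    have [B1 B2] := pi_sym_neg 1 (- q) 0 p hq' B.
    move: A; rewrite pi_diag; lra.
subst q.
have P1 : p = 1 \/ p = 0 by apply/pi_diag/H0/pi_diag; left.
have V1 : v = 1 \/ v = 0 by apply/pi_diag/H0/pi_diag; right.
have O1 : 1 = p \/ 1 = v by apply/pi_diag/H0/pi_diag; left.
have Z1 : 0 = p \/ 0 = v by apply/pi_diag/H0/pi_diag; right.
have [[-> ->]|[-> ->]] : (p = 1 /\ v = 0) \/ (p = 0 /\ v = 1).
  by case: P1 => P1; case: V1 => V1; case: O1 => O1; case: Z1 => Z1; lra.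
- by left => a b d; rewrite /slin /=; congr PM; ring.
- by right => a b d; rewrite /slin /=; congr PM; ring.
Qed.

Lemma zchar (P11 P12 P21 P22 l : R) :
  (exists z1 z2 : R, (z1 != 0 \/ z2 != 0) /\ [/\ 0 <= z1, 0 <= z2,
      0 <= (P11 - l) * z1 + P12 * z2, 0 <= P21 * z1 + (P22 - l) * z2 &
      z1 * ((P11 - l) * z1 + P12 * z2) + z2 * (P21 * z1 + (P22 - l) * z2) = 0])
  <-> Pi (PM P11 P12 P21 P22) l.
Proof.
rewrite /Pi /=; split.
- move=> [z1 [z2 [nz [hz1 hz2 hu1 hu2 hin]]]].
  set u1 := (P11 - l) * z1 + P12 * z2 in hu1 hin.
  set u2 := P21 * z1 + (P22 - l) * z2 in hu2 hin.
  have h1 : 0 <= z1 * u1 by apply: mulr_ge0.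
  have h2 : 0 <= z2 * u2 by apply: mulr_ge0.
  have e1 : z1 * u1 = 0 by lra.
  have e2 : z2 * u2 = 0 by lra.
  have [z20|z2p] := eqVneq z2 0.
  + have z1n : z1 != 0 by case: nz => //; rewrite z20 eqxx.
    have u10 : u1 = 0 by move/eqP: e1; rewrite mulf_eq0 (negbTE z1n) /= => /eqP.
    have z1p : 0 < z1 by rewrite lt_neqAle eq_sym z1n.
    left; split.
    * by move: hu2; rewrite /u2 z20 mulr0 addr0 pmulr_lge0.
    * move: u10; rewrite /u1 z20 mulr0 addr0 => /eqP; rewrite mulf_eq0 (negbTE z1n) orbF subr_eq0.
      by move/eqP.
  + have u20 : u2 = 0 by move/eqP: e2; rewrite mulf_eq0 (negbTE z2p) /= => /eqP.
    have z2q : 0 < z2 by rewrite lt_neqAle eq_sym z2p.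
    have [z10|z1p] := eqVneq z1 0.
    * right; left; split.
      - by move: hu1; rewrite /u1 z10 mulr0 add0r pmulr_lge0.
      - move: u20; rewrite /u2 z10 mulr0 add0r => /eqP; rewrite mulf_eq0 (negbTE z2p) orbF subr_eq0.
        by move/eqP.
    * have u10 : u1 = 0 by move/eqP: e1; rewrite mulf_eq0 (negbTE z1p) /= => /eqP.
      have z1q : 0 < z1 by rewrite lt_neqAle eq_sym z1p.
      right; right; exists (z2 / z1); split; first by apply: divr_gt0.
      split.
      - apply: (mulfI z1p); rewrite mulrDr.
        have -> : z1 * (P12 * (z2 / z1)) = P12 * z2 by field.
        by move: u10; rewrite /u1 => ?; lra.
      - apply: (mulfI z1p); rewrite mulrDr.
        have -> : z1 * (P22 * (z2 / z1)) = P22 * z2 by field.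
        have -> : z1 * (l * (z2 / z1)) = l * z2 by field.
        by move: u20; rewrite /u2 => ?; lra.
- case=> [[h ->]|[[h ->]|[w [hw [f1 f2]]]]].
  + exists 1, 0; split; first by left; rewrite oner_neq0.
    rewrite subrr; split; rewrite ?mul0r ?mulr0 ?mulr1 ?mul1r ?addr0 ?add0r //; lra.
  + exists 0, 1; split; first by right; rewrite oner_neq0.
    rewrite subrr; split; rewrite ?mul0r ?mulr0 ?mulr1 ?mul1r ?addr0 ?add0r //; lra.
  + have u1 : (P11 - l) * 1 + P12 * w = 0 by rewrite -f1; ring.
    have u2 : P21 * 1 + (P22 - l) * w = 0 by rewrite mulrBl -f2; ring.
    exists 1, w; rewrite u1 u2; split; first by left; rewrite oner_neq0.
    split; rewrite ?mul0r ?mulr0 ?mulr1 ?mul1r ?addr0 ?add0r //; lra.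
Qed.

Definition pe (A : 'M[R]_2) : pm := PM ((A 0 0 + A 0 1 + A 1 0 + A 1 1) / 2)
  ((- A 0 0 + A 0 1 - A 1 0 + A 1 1) / 2) ((- A 0 0 - A 0 1 + A 1 0 + A 1 1) / 2)
  ((A 0 0 - A 0 1 - A 1 0 + A 1 1) / 2).
Definition toL (m : pm) : 'M[R]_2 := \matrix_(i < 2, j < 2)
  if i == 0 then (if j == 0 then (p11 m - p12 m - p21 m + p22 m) / 2
                  else (p11 m + p12 m - p21 m - p22 m) / 2)
  else (if j == 0 then (p11 m - p12 m + p21 m - p22 m) / 2
        else (p11 m + p12 m + p21 m + p22 m) / 2).

Lemma ord2 (i : 'I_2) : i = 0 \/ i = 1.
Proof. case: i => [[|[|//]]] Hi; [left|right]; exact/val_inj. Qed.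

Lemma mx2eq (A B : 'M[R]_2) : A 0 0 = B 0 0 -> A 0 1 = B 0 1 -> A 1 0 = B 1 0 ->
  A 1 1 = B 1 1 -> A = B.
Proof.
move=> h1 h2 h3 h4; apply/matrixP => i j.
by case: (ord2 i) => ->; case: (ord2 j) => ->.
Qed.

Lemma sum2 (F : 'I_2 -> R) : \sum_(i < 2) F i = F 0 + F 1.
Proof. rewrite !big_ord_recl big_ord0 addr0. by congr (F _ + F _); apply/val_inj. Qed.

Lemma toL_pe A : toL (pe A) = A.
Proof. by apply: mx2eq; rewrite mxE /=; field. Qed.

Lemma pe_toL m : pe (toL m) = m.
Proof. by case: m => a b c d; rewrite /pe !mxE /=; congr PM; field. Qed.

Lemma mulmx2 (B : 'M[R]_2) (x : 'cV[R]_2) i : (B *m x) i 0 = B i 0 * x 0 0 + B i 1 * x 1 0.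
Proof. by rewrite mxE sum2. Qed.

Lemma quad2 (B : 'M[R]_2) (x : 'cV[R]_2) :
  (x^T *m B *m x) 0 0 = x 0 0 * (B *m x) 0 0 + x 1 0 * (B *m x) 1 0.
Proof. by rewrite -mulmxA mxE sum2 !mxE. Qed.

Lemma subl (A : 'M[R]_2) l :
  [/\ (A - l%:M) 0 0 = A 0 0 - l, (A - l%:M) 0 1 = A 0 1,
      (A - l%:M) 1 0 = A 1 0 & (A - l%:M) 1 1 = A 1 1 - l].
Proof. by rewrite !mxE /= !mulr1n !mulr0n !subr0. Qed.

Lemma Leig_pe (A : 'M[R]_2) l : L_eigenvalue A l <-> Pi (pe A) l.
Proof.
have [s00 s01 s10 s11] := subl A l.
rewrite /pe -zchar; split.
- case=> x [nx hx hy hq].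
  rewrite /lorentz_cone !mulmx2 s00 s01 s10 s11 in hy.
  rewrite quad2 !mulmx2 s00 s01 s10 s11 in hq.
  rewrite /lorentz_cone in hx.
  move: hx hy; rewrite !ler_norml => /andP [hx1 hx2] /andP [hy1 hy2].
  set x0 := x 0 0 in hx1 hx2 hy1 hy2 hq *.
  set x1 := x 1 0 in hx1 hx2 hy1 hy2 hq *.
  have nx' : x0 != 0 \/ x1 != 0.
    case: (eqVneq x0 0) => h0; last by left.
    case: (eqVneq x1 0) => h1; last by right.
    exfalso; move/eqP: nx; apply; apply/matrixP => i j.
    rewrite ord1 !mxE; case: (ord2 i) => ->; [exact: h0| exact: h1].
  exists ((x0 + x1) / 2), ((x1 - x0) / 2); split.
  + case: nx' => h.
    * case: (eqVneq ((x0 + x1) / 2) 0) => e; last by left.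
      by right; apply/eqP => e'; move/eqP: h; apply; lra.
    * case: (eqVneq ((x0 + x1) / 2) 0) => e; last by left.
      by right; apply/eqP => e'; move/eqP: h; apply; lra.
  split; lra.
- case=> z1 [z2 [nz [hz1 hz2 hu1 hu2 hin]]].
  exists (\col_(i < 2) (if i == 0 then z1 - z2 else z1 + z2)); split.
  + apply/eqP => /matrixP E.
    have E0 := E 0 0; have E1 := E 1 0; rewrite !mxE /= in E0 E1.
    by case: nz => /eqP; apply; lra.
  + by rewrite /lorentz_cone !mxE /= ler_norml; apply/andP; split; lra.
  + rewrite /lorentz_cone !mulmx2 s00 s01 s10 s11 !mxE /= ler_norml; apply/andP; split.
    * have -> : (A 0 0 - l) * (z1 - z2) + A 0 1 * (z1 + z2) =
         ((A 0 0 + A 0 1 + A 1 0 + A 1 1) / 2 - l) * z1 + (- A 0 0 + A 0 1 - A 1 0 + A 1 1) / 2 * z2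
         - ((- A 0 0 - A 0 1 + A 1 0 + A 1 1) / 2 * z1 + ((A 0 0 - A 0 1 - A 1 0 + A 1 1) / 2 - l) * z2)
        by field.
      have -> : A 1 0 * (z1 - z2) + (A 1 1 - l) * (z1 + z2) =
         ((A 0 0 + A 0 1 + A 1 0 + A 1 1) / 2 - l) * z1 + (- A 0 0 + A 0 1 - A 1 0 + A 1 1) / 2 * z2
         + ((- A 0 0 - A 0 1 + A 1 0 + A 1 1) / 2 * z1 + ((A 0 0 - A 0 1 - A 1 0 + A 1 1) / 2 - l) * z2)
        by field.
      lra.
    * have -> : (A 0 0 - l) * (z1 - z2) + A 0 1 * (z1 + z2) =
         ((A 0 0 + A 0 1 + A 1 0 + A 1 1) / 2 - l) * z1 + (- A 0 0 + A 0 1 - A 1 0 + A 1 1) / 2 * z2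
         - ((- A 0 0 - A 0 1 + A 1 0 + A 1 1) / 2 * z1 + ((A 0 0 - A 0 1 - A 1 0 + A 1 1) / 2 - l) * z2)
        by field.
      have -> : A 1 0 * (z1 - z2) + (A 1 1 - l) * (z1 + z2) =
         ((A 0 0 + A 0 1 + A 1 0 + A 1 1) / 2 - l) * z1 + (- A 0 0 + A 0 1 - A 1 0 + A 1 1) / 2 * z2
         + ((- A 0 0 - A 0 1 + A 1 0 + A 1 1) / 2 * z1 + ((A 0 0 - A 0 1 - A 1 0 + A 1 1) / 2 - l) * z2)
        by field.
      lra.
  + rewrite quad2 !mulmx2 s00 s01 s10 s11 !mxE /=.
    lra.
Qed.

Lemma mul2 (B C : 'M[R]_2) i j : (B *m C) i j = B i 0 * C 0 j + B i 1 * C 1 j.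
Proof. by rewrite mxE sum2. Qed.

Definition Pinv (a b : R) : 'M[R]_2 := \matrix_(i < 2, j < 2) if i == j then a else - b.

Lemma invP (a b : R) : a ^+ 2 - b ^+ 2 = 1 -> invmx (Pmx a b) = Pinv a b.
Proof.
move=> E.
have h : Pmx a b *m Pinv a b = 1%:M.
  apply: mx2eq; rewrite !mul2 !mxE /=; try lra; rewrite -E; ring.
have [u _] := mulmx1_unit h.
by rewrite -(mulKmx u (Pinv a b)) h mulmx1.
Qed.

Lemma invQ (a b : R) : a ^+ 2 - b ^+ 2 = 1 -> invmx (Qmx a b) = Qmx a b.
Proof.
move=> E.
have h : Qmx a b *m Qmx a b = 1%:M.
  apply: mx2eq; rewrite !mul2 !mxE /=; try lra; rewrite -E; ring.
have [u _] := mulmx1_unit h.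
by rewrite -{2}(mulKmx u (Qmx a b)) h mulmx1.
Qed.

Lemma peP (a b : R) (A : 'M[R]_2) : a ^+ 2 - b ^+ 2 = 1 ->
  pe (Pmx a b *m A *m invmx (Pmx a b)) =
  PM (p11 (pe A)) ((a + b) ^+ 2 * p12 (pe A)) ((a - b) ^+ 2 * p21 (pe A)) (p22 (pe A)).
Proof.
move=> E; rewrite invP // /pe /= !mul2 !mxE /=; congr PM.
- transitivity ((a ^+ 2 - b ^+ 2) * ((A 0 0 + A 0 1 + A 1 0 + A 1 1) / 2)); first by field.
  by rewrite E mul1r.
- by field.
- by field.
- transitivity ((a ^+ 2 - b ^+ 2) * ((A 0 0 - A 0 1 - A 1 0 + A 1 1) / 2)); first by field.
  by rewrite E mul1r.
Qed.

Lemma peQ (a b : R) (A : 'M[R]_2) : a ^+ 2 - b ^+ 2 = 1 ->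
  pe (Qmx a b *m A *m invmx (Qmx a b)) =
  PM (p22 (pe A)) ((a - b) ^+ 2 * p21 (pe A)) ((a + b) ^+ 2 * p12 (pe A)) (p11 (pe A)).
Proof.
move=> E; rewrite invQ // /pe /= !mul2 !mxE /=; congr PM.
- transitivity ((a ^+ 2 - b ^+ 2) * ((A 0 0 - A 0 1 - A 1 0 + A 1 1) / 2)); first by field.
  by rewrite E mul1r.
- by field.
- by field.
- transitivity ((a ^+ 2 - b ^+ 2) * ((A 0 0 + A 0 1 + A 1 0 + A 1 1) / 2)); first by field.
  by rewrite E mul1r.
Qed.

Lemma Pi_scale1 (u v a b c d l : R) : 0 < u -> u * v = 1 ->
  Pi (PM a (u * b) (v * c) d) l -> Pi (PM a b c d) l.
Proof.
move=> hu huv; have hv : 0 < v by nra.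
have un : u != 0 by rewrite gt_eqF.
rewrite /Pi /=; case=> [[h ->]|[[h ->]|[w [hw [f1 f2]]]]].
- by left; split => //; move: h; rewrite pmulr_rge0.
- by right; left; split => //; move: h; rewrite pmulr_rge0.
- right; right; exists (u * w); split; first exact: mulr_gt0.
  split; first by rewrite -f1; ring.
  have e : u * (v * c) = c by rewrite mulrA huv mul1r.
  transitivity (u * (v * c + d * w)); first by rewrite mulrDr e; ring.
  by rewrite f2; ring.
Qed.

Lemma Pi_scale (u v a b c d l : R) : 0 < u -> u * v = 1 ->
  Pi (PM a (u * b) (v * c) d) l <-> Pi (PM a b c d) l.
Proof.
move=> hu huv; split; first exact: Pi_scale1.
have hv : 0 < v by nra.
move=> h; apply: (Pi_scale1 v u) => //; first by rewrite mulrC.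
by rewrite !mulrA (mulrC v u) huv !mul1r.
Qed.

Lemma conjP_spec (a b : R) (A : 'M[R]_2) l : a ^+ 2 - b ^+ 2 = 1 ->
  L_eigenvalue (Pmx a b *m A *m invmx (Pmx a b)) l <-> L_eigenvalue A l.
Proof.
move=> E; rewrite !Leig_pe peP //.
have hab : (a + b) * (a - b) = 1 by rewrite -E; ring.
have hu : 0 < (a + b) ^+ 2.
  rewrite lt_neqAle sqr_ge0 andbT eq_sym sqrf_eq0; apply/eqP => h.
  by rewrite h mul0r in hab; lra.
apply: Pi_scale => //; rewrite -exprMn hab expr1n //.
Qed.

Lemma conjQ_spec (a b : R) (A : 'M[R]_2) l : a ^+ 2 - b ^+ 2 = 1 ->
  L_eigenvalue (Qmx a b *m A *m invmx (Qmx a b)) l <-> L_eigenvalue A l.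
Proof.
move=> E; rewrite !Leig_pe peQ //.
have hab : (a + b) * (a - b) = 1 by rewrite -E; ring.
have hu : 0 < (a + b) ^+ 2.
  rewrite lt_neqAle sqr_ge0 andbT eq_sym sqrf_eq0; apply/eqP => h.
  by rewrite h mul0r in hab; lra.
rewrite -(Pi_swap (PM _ _ _ _)) /swp /=.
apply: Pi_scale => //; rewrite -exprMn hab expr1n //.
Qed.

Lemma pe_lin (c : R) (A B : 'M[R]_2) : pe (c *: A + B) =
  PM (c * p11 (pe A) + p11 (pe B)) (c * p12 (pe A) + p12 (pe B))
     (c * p21 (pe A) + p21 (pe B)) (c * p22 (pe A) + p22 (pe B)).
Proof. by rewrite /pe !mxE /=; congr PM; field. Qed.

Lemma pe0 : pe (0 : 'M[R]_2) = PM 0 0 0 0.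
Proof. by rewrite /pe !mxE /=; congr PM; field. Qed.

Lemma dec4 (m : pm) : toL m = p11 m *: toL (PM 1 0 0 0) + (p12 m *: toL (PM 0 1 0 0) +
  (p21 m *: toL (PM 0 0 1 0) + (p22 m *: toL (PM 0 0 0 1) + 0))).
Proof. by case: m => a b c d; apply: mx2eq; rewrite !mxE /=; field. Qed.

Lemma phi_dec (phi : 'M[R]_2 -> 'M[R]_2) :
  (forall (c : R) (A B : 'M[R]_2), phi (c *: A + B) = c *: phi A + phi B) ->
  forall A, pe (phi A) = lin (pe (phi (toL (PM 1 0 0 0)))) (pe (phi (toL (PM 0 1 0 0))))
     (pe (phi (toL (PM 0 0 1 0)))) (pe (phi (toL (PM 0 0 0 1)))) (pe A).
Proof.
move=> hl A.
have phi0 : phi 0 = 0.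
  have h := hl 1 0 0; rewrite !scale1r addr0 in h.
  by apply: (addrI (phi 0)); rewrite addr0 -h.
rewrite -{1}(toL_pe A) dec4 !hl phi0 !pe_lin pe0 /lin /=; congr PM; ring.
Qed.

Lemma sym2_iff (A : 'M[R]_2) : sym2 A <-> A 0 1 = A 1 0.
Proof.
rewrite /sym2; split.
- by move/matrixP/(_ 1 0); rewrite mxE.
- move=> h; apply/matrixP => i j; rewrite mxE.
  by case: (ord2 i) => ->; case: (ord2 j) => ->.
Qed.

Lemma sym0 : sym2 (0 : 'M[R]_2).
Proof. by apply/sym2_iff; rewrite !mxE. Qed.

Lemma sym_lin (c : R) (A B : 'M[R]_2) : sym2 A -> sym2 B -> sym2 (c *: A + B).
Proof. by move=> /sym2_iff hA /sym2_iff hB; apply/sym2_iff; rewrite !mxE hA hB. Qed.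

Lemma symL (m : pm) : p12 m = p21 m -> sym2 (toL m).
Proof. by move=> h; apply/sym2_iff; rewrite !mxE /= h; field. Qed.

Lemma pe_sym (A : 'M[R]_2) : sym2 A -> p12 (pe A) = p21 (pe A).
Proof. by move/sym2_iff => h; rewrite /pe /= h; field. Qed.

Lemma sym_pe (A : 'M[R]_2) : sym2 A ->
  A = toL (PM (p11 (pe A)) (p12 (pe A)) (p12 (pe A)) (p22 (pe A))).
Proof.
move=> hA; rewrite -{1}(toL_pe A); congr toL.
by apply: pm_eq => //; rewrite (pe_sym A hA).
Qed.

Lemma phi_dec2 (phi : 'M[R]_2 -> 'M[R]_2) :
  (forall (c : R) (A B : 'M[R]_2), sym2 A -> sym2 B ->
        phi (c *: A + B) = c *: phi A + phi B) ->
  forall a b d, pe (phi (toL (PM a b b d))) =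
    slin (pe (phi (toL (PM 1 0 0 0)))) (pe (phi (toL (PM 0 1 1 0))))
         (pe (phi (toL (PM 0 0 0 1)))) a b d.
Proof.
move=> hl a b d.
have phi0 : phi 0 = 0.
  have h := hl 1 0 0 sym0 sym0; rewrite !scale1r addr0 in h.
  by apply: (addrI (phi 0)); rewrite addr0 -h.
have s1 : sym2 (toL (PM 1 0 0 0 : pm)) by apply: symL.
have s2 : sym2 (toL (PM 0 1 1 0 : pm)) by apply: symL.
have s4 : sym2 (toL (PM 0 0 0 1 : pm)) by apply: symL.
have -> : toL (PM a b b d) = a *: toL (PM 1 0 0 0) + (b *: toL (PM 0 1 1 0) +
   (d *: toL (PM 0 0 0 1) + 0)).
  by apply: mx2eq; rewrite !mxE /=; field.
rewrite hl //; last by apply: sym_lin => //; apply: sym_lin => //; exact: sym0.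
rewrite hl //; last by apply: sym_lin => //; exact: sym0.
rewrite hl //; last exact: sym0.
rewrite phi0 !pe_lin pe0 /slin /=; congr PM; ring.
Qed.

Lemma main :
  (forall phi : 'M[R]_2 -> 'M[R]_2,
     (forall (c : R) (A B : 'M[R]_2), phi (c *: A + B) = c *: phi A + phi B) ->
     ((forall A : 'M[R]_2, same_L_spectrum (phi A) A) <->
      exists a b : R, a ^+ 2 - b ^+ 2 = 1 /\
        ((forall A : 'M[R]_2, phi A = Pmx a b *m A *m invmx (Pmx a b)) \/
         (forall A : 'M[R]_2, phi A = Qmx a b *m A *m invmx (Qmx a b)))))
  /\
  (forall phi : 'M[R]_2 -> 'M[R]_2,
     (forall A : 'M[R]_2, sym2 A -> sym2 (phi A)) ->
     (forall (c : R) (A B : 'M[R]_2), sym2 A -> sym2 B ->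
        phi (c *: A + B) = c *: phi A + phi B) ->
     ((forall A : 'M[R]_2, sym2 A -> same_L_spectrum (phi A) A) <->
      exists a b : R, [/\ a ^+ 2 - b ^+ 2 = 1, b = 0 &
        ((forall A : 'M[R]_2, sym2 A ->
            phi A = Pmx a b *m A *m invmx (Pmx a b)) \/
         (forall A : 'M[R]_2, sym2 A ->
            phi A = Qmx a b *m A *m invmx (Qmx a b)))])).
Proof.
split.
- move=> phi hl.
  have Hpe := phi_dec phi hl.
  set X1 := pe (phi (toL (PM 1 0 0 0))) in Hpe.
  set X2 := pe (phi (toL (PM 0 1 0 0))) in Hpe.
  set X3 := pe (phi (toL (PM 0 0 1 0))) in Hpe.
  set X4 := pe (phi (toL (PM 0 0 0 1))) in Hpe.
  split.
  + move=> Hs.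
    have H : forall m l, Pi (lin X1 X2 X3 X4 m) l <-> Pi m l.
      move=> m l; rewrite -(pe_toL m) -Hpe -!Leig_pe; exact: Hs.
    have [r [hr Hl]] := core1 X1 X2 X3 X4 H.
    have [k [k0 kk]] := ex_sqrt r (ltW hr).
    have kp : 0 < k by rewrite lt_neqAle k0 andbT; apply/eqP => e; rewrite -e mul0r in kk; lra.
    have kn : k != 0 by rewrite gt_eqF.
    case: Hl => Hl.
    * exists ((k + k^-1) / 2), ((k - k^-1) / 2).
      have E : ((k + k^-1) / 2) ^+ 2 - ((k - k^-1) / 2) ^+ 2 = 1 by field.
      split => //; left => A.
      rewrite -(toL_pe (phi A)) -(toL_pe (Pmx _ _ *m A *m _)); congr toL.
      rewrite Hpe peP // Hl -kk; congr PM; by field.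
    * exists ((k + k^-1) / 2), ((k^-1 - k) / 2).
      have E : ((k + k^-1) / 2) ^+ 2 - ((k^-1 - k) / 2) ^+ 2 = 1 by field.
      split => //; right => A.
      rewrite -(toL_pe (phi A)) -(toL_pe (Qmx _ _ *m A *m _)); congr toL.
      rewrite Hpe peQ // Hl -kk; congr PM; by field.
  + case=> a [b [E [HP|HQ]]] A l.
    * by rewrite /L_spectrum HP; exact: conjP_spec.
    * by rewrite /L_spectrum HQ; exact: conjQ_spec.
- move=> phi hsym hl.
  have Hpe := phi_dec2 phi hl.
  set Y1 := pe (phi (toL (PM 1 0 0 0))) in Hpe.
  set Y2 := pe (phi (toL (PM 0 1 1 0))) in Hpe.
  set Y4 := pe (phi (toL (PM 0 0 0 1))) in Hpe.
  have E : (1 : R) ^+ 2 - 0 ^+ 2 = 1 by rewrite expr1n expr0n subr0.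
  split.
  + move=> Hs.
    have H : forall a b d l, Pi (slin Y1 Y2 Y4 a b d) l <-> Pi (PM a b b d) l.
      move=> a b d l; rewrite -Hpe -{2}(pe_toL (PM a b b d)) -!Leig_pe.
      by apply: Hs; apply: symL.
    have s1 : p12 Y1 = p21 Y1 by apply: pe_sym; apply: hsym; apply: symL.
    have s2 : p12 Y2 = p21 Y2 by apply: pe_sym; apply: hsym; apply: symL.
    have s4 : p12 Y4 = p21 Y4 by apply: pe_sym; apply: hsym; apply: symL.
    have [Hl|Hl] := core2 Y1 Y2 Y4 s1 s2 s4 H.
    * exists 1, 0; split => //; left => A hA.
      rewrite -(toL_pe (phi A)) -(toL_pe (Pmx _ _ *m A *m _)); congr toL.
      rewrite peP // {1}(sym_pe A hA) Hpe Hl -(pe_sym A hA); congr PM; ring.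
    * exists 1, 0; split => //; right => A hA.
      rewrite -(toL_pe (phi A)) -(toL_pe (Qmx _ _ *m A *m _)); congr toL.
      rewrite peQ // {1}(sym_pe A hA) Hpe Hl -(pe_sym A hA); congr PM; ring.
  + case=> a [b [E' _ [HP|HQ]]] A hA l.
    * by rewrite /L_spectrum HP //; exact: conjP_spec.
    * by rewrite /L_spectrum HQ //; exact: conjQ_spec.
Qed.
End Proof.

Theorem theorem1p1 (R : realType) :
  (forall phi : 'M[R]_2 -> 'M[R]_2,
     (forall (c : R) (A B : 'M[R]_2), phi (c *: A + B) = c *: phi A + phi B) ->
     ((forall A : 'M[R]_2, same_L_spectrum (phi A) A) <->
      exists a b : R, a ^+ 2 - b ^+ 2 = 1 /\
        ((forall A : 'M[R]_2, phi A = Pmx a b *m A *m invmx (Pmx a b)) \/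
         (forall A : 'M[R]_2, phi A = Qmx a b *m A *m invmx (Qmx a b)))))
  /\
  (forall phi : 'M[R]_2 -> 'M[R]_2,
     (forall A : 'M[R]_2, sym2 A -> sym2 (phi A)) ->
     (forall (c : R) (A B : 'M[R]_2), sym2 A -> sym2 B ->
        phi (c *: A + B) = c *: phi A + phi B) ->
     ((forall A : 'M[R]_2, sym2 A -> same_L_spectrum (phi A) A) <->
      exists a b : R, [/\ a ^+ 2 - b ^+ 2 = 1, b = 0 &
        ((forall A : 'M[R]_2, sym2 A ->
            phi A = Pmx a b *m A *m invmx (Pmx a b)) \/
         (forall A : 'M[R]_2, sym2 A ->
            phi A = Qmx a b *m A *m invmx (Qmx a b)))])).
Proof. exact: main. Qed.
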